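(* Let $(X,d)$ be a complete metric space, $\preceq$ a partial order on $X$, and $F:X\times X\rightarrow X$ such that for every $\varepsilon>0$ there exists $\delta(\varepsilon)>0$ for which, for all $x,y,u,v\in X$, \[ x\preceq u,\ y\succeq v,\ \varepsilon\leq\tfrac{1}{2}[d(x,u)+d(y,v)]<\varepsilon+\delta(\varepsilon)\Rightarrow d(F(x,y),F(u,v))<\varepsilon. \] Suppose: (H1) $F$ has the mixed monotone property; (H2) there exist $x_{0},y_{0}\in X$ with $x_{0}\preceq F(x_{0},y_{0})$ and $y_{0}\succeq F(y_{0},x_{0})$. If either (H3) $F$ is continuous, or (H4) whenever $\{x_{n}\}$ is a nondecreasing (respectively, nonincreasing) sequence in $X$ with $x_{n}\rightarrow x$, then $x_{n}\preceq x$ (respectively, $x_{n}\succeq x$) for all $n$, then $F$ has a coupled fixed point $(x^{\ast},y^{\ast})$, i.e., $F(x^{\ast},y^{\ast})=x^{\ast}$ and $F(y^{\ast},x^{\ast})=y^{\ast}$. If in addition (H5) $X$ is $\preceq$--connected, then $x^{\ast}=y^{\ast}$, $(x^{\ast},x^{\ast})$ is the unique coupled fixed point of $F$, $x^{\ast}$ is the unique fixed point of $F$ (unique $x$ with $F(x,x)=x$), and $F^{n}(x,y)\rightarrow x^{\ast}$ as $n\rightarrow\infty$ for all $x,y\in X$.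
   Context: $F$ has the mixed monotone property if for all $x_1,x_2,y_1,y_2\in X$, $x_1\preceq x_2$ and $y_1\succeq y_2$ imply $F(x_1,y_1)\preceq F(x_2,y_2)$. $X$ is $\preceq$--connected if for every $x,y\in X$ there exist $z_0,\dots,z_n\in X$ with $z_0=x$, $z_n=y$ and $z_{i-1},z_i$ comparable (i.e., $z_{i-1}\preceq z_i$ or $z_i\preceq z_{i-1}$) for every $i\in\{1,\dots,n\}$. Iterates of $F$: with $(G\ast H)(x,y)=G(H(x,y),H(y,x))$ for $G,H:X\times X\to X$, set $F^{0}(x,y)=x$ and $F^{n+1}=F\ast F^{n}$. *)

(* Defs.v *)
From Stdlib Require Import Reals.
Open Scope R_scope.

Section Defs.
Variable X : Type.

Definition is_metric (d : X -> X -> R) : Prop :=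
  (forall x y, d x y = 0 <-> x = y) /\
  (forall x y, d x y = d y x) /\
  (forall x y z, d x z <= d x y + d y z).

Definition cauchy_seq (d : X -> X -> R) (u : nat -> X) : Prop :=
  forall eps, 0 < eps -> exists N, forall m n, (N <= m)%nat -> (N <= n)%nat ->
    d (u m) (u n) < eps.

Definition seq_converges (d : X -> X -> R) (u : nat -> X) (l : X) : Prop :=
  forall eps, 0 < eps -> exists N, forall n, (N <= n)%nat -> d (u n) l < eps.

Definition complete_metric (d : X -> X -> R) : Prop :=
  forall u, cauchy_seq d u -> exists l, seq_converges d u l.

Definition partial_order (le : X -> X -> Prop) : Prop :=
  (forall x, le x x) /\
  (forall x y, le x y -> le y x -> x = y) /\
  (forall x y z, le x y -> le y z -> le x z).

Definition mixed_monotone (le : X -> X -> Prop) (F : X -> X -> X) : Prop :=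
  forall x1 x2 y1 y2, le x1 x2 -> le y2 y1 -> le (F x1 y1) (F x2 y2).

Definition continuous2 (d : X -> X -> R) (F : X -> X -> X) : Prop :=
  forall x y eps, 0 < eps -> exists delta, 0 < delta /\
    forall u v, d x u < delta -> d y v < delta -> d (F x y) (F u v) < eps.

Definition comparable (le : X -> X -> Prop) (x y : X) : Prop := le x y \/ le y x.

Definition order_connected (le : X -> X -> Prop) : Prop :=
  forall x y, exists (n : nat) (z : nat -> X),
    z 0%nat = x /\ z n = y /\
    forall i, (1 <= i <= n)%nat -> comparable le (z (i - 1)%nat) (z i).

Fixpoint Fiter (F : X -> X -> X) (n : nat) : X -> X -> X :=
  match n with
  | O => fun x _ => x
  | S m => fun x y => F (Fiter F m x y) (Fiter F m y x)
  end.

Definition coupled_fixed_point (F : X -> X -> X) (x y : X) : Prop :=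
  F x y = x /\ F y x = y.

End Defs.

(* Main.v *)
Require Import Defs.
From Stdlib Require Import Reals.
From Stdlib Require Import Lra Lia Classical.
Open Scope R_scope.

Definition Dp {X} (d : X -> X -> R) (p q : X * X) :=
  (d (fst p) (fst q) + d (snd p) (snd q)) / 2.
Definition Rp {X} (le : X -> X -> Prop) (p q : X * X) :=
  le (fst p) (fst q) /\ le (snd q) (snd p).
Definition Gp {X} (F : X -> X -> X) (p : X * X) :=
  (F (fst p) (snd p), F (snd p) (fst p)).
Fixpoint Gn {X} (F : X -> X -> X) (n : nat) (p : X * X) : X * X :=
  match n with O => p | S m => Gp F (Gn F m p) end.
Definition linked {X} d (F : X -> X -> X) (p q : X * X) :=
  forall eps, 0 < eps -> exists N, forall n, (N <= n)%nat -> Dp d (Gn F n p) (Gn F n q) < eps.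

Lemma Gn_Fiter {X} (F : X -> X -> X) n x y :
  Gn F n (x, y) = (Fiter X F n x y, Fiter X F n y x).
Proof. induction n; simpl; [reflexivity|]. rewrite IHn. reflexivity. Qed.

Lemma Gn_S' {X} (F : X -> X -> X) n p : Gn F (S n) p = Gn F n (Gp F p).
Proof. induction n; simpl; [reflexivity|]. simpl in IHn. rewrite IHn. reflexivity. Qed.

Lemma Gn_fix {X} (F : X -> X -> X) n p : Gp F p = p -> Gn F n p = p.
Proof. intro H; induction n; simpl; [reflexivity|]. rewrite IHn. exact H. Qed.

Section M.
Lemma d_self {X} (d : X -> X -> R) : is_metric X d -> forall x, d x x = 0.
Proof. intros [H _] x. apply H. reflexivity. Qed.
Lemma d_sym {X} (d : X -> X -> R) : is_metric X d -> forall x y, d x y = d y x.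
Proof. intros [_ [H _]]. exact H. Qed.
Lemma d_tri {X} (d : X -> X -> R) : is_metric X d -> forall x y z, d x z <= d x y + d y z.
Proof. intros [_ [_ H]]. exact H. Qed.
Lemma d_pos {X} (d : X -> X -> R) : is_metric X d -> forall x y, 0 <= d x y.
Proof. intros Hm x y. pose proof (d_tri d Hm x y x). rewrite (d_self d Hm) in H.
  rewrite (d_sym d Hm y x) in H. lra. Qed.
Lemma d_eq {X} (d : X -> X -> R) : is_metric X d -> forall x y, d x y = 0 -> x = y.
Proof. intros [H _] x y. apply H. Qed.
Lemma d_small {X} (d : X -> X -> R) : is_metric X d -> forall x y,
  (forall eps, 0 < eps -> d x y < eps) -> x = y.
Proof. intros Hm x y H. apply (d_eq d Hm). pose proof (d_pos d Hm x y).
  destruct (Rle_lt_or_eq_dec _ _ H0); [|lra]. specialize (H _ r). lra. Qed.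

Lemma Dp_self {X} (d : X -> X -> R) : is_metric X d -> forall p, Dp d p p = 0.
Proof. intros Hm p. unfold Dp. rewrite !(d_self d Hm). lra. Qed.
Lemma Dp_sym {X} (d : X -> X -> R) : is_metric X d -> forall p q, Dp d p q = Dp d q p.
Proof. intros Hm p q. unfold Dp. rewrite (d_sym d Hm (fst p)), (d_sym d Hm (snd p)). lra. Qed.
Lemma Dp_tri {X} (d : X -> X -> R) : is_metric X d -> forall p q r, Dp d p r <= Dp d p q + Dp d q r.
Proof. intros Hm p q r. unfold Dp. pose proof (d_tri d Hm (fst p) (fst q) (fst r)).
  pose proof (d_tri d Hm (snd p) (snd q) (snd r)). lra. Qed.
Lemma Dp_pos {X} (d : X -> X -> R) : is_metric X d -> forall p q, 0 <= Dp d p q.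
Proof. intros Hm p q. unfold Dp. pose proof (d_pos d Hm (fst p) (fst q)).
  pose proof (d_pos d Hm (snd p) (snd q)). lra. Qed.
Lemma Dp_fst {X} (d : X -> X -> R) : is_metric X d -> forall p q, d (fst p) (fst q) <= 2 * Dp d p q.
Proof. intros Hm p q. unfold Dp. pose proof (d_pos d Hm (snd p) (snd q)). lra. Qed.
Lemma Dp_snd {X} (d : X -> X -> R) : is_metric X d -> forall p q, d (snd p) (snd q) <= 2 * Dp d p q.
Proof. intros Hm p q. unfold Dp. pose proof (d_pos d Hm (fst p) (fst q)). lra. Qed.
Lemma Dp_small {X} (d : X -> X -> R) : is_metric X d -> forall p q,
  (forall eps, 0 < eps -> Dp d p q < eps) -> p = q.
Proof. intros Hm [x y] [u v] H.
  assert (x = u). { apply (d_small d Hm). intros e He. 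
    pose proof (Dp_fst d Hm (x,y) (u,v)). pose proof (Dp_snd d Hm (x,y) (u,v)).
    pose proof (Dp_pos d Hm (x, y) (u, v)). simpl in *.
    assert (Dp d (x,y) (u,v) < e/2) by (apply H; lra). lra. }
  assert (y = v). { apply (d_small d Hm). intros e He.
    pose proof (Dp_snd d Hm (x,y) (u,v)). simpl in *.
    assert (Dp d (x,y) (u,v) < e/2) by (apply H; lra). lra. }
  subst; reflexivity. Qed.
End M.

Section Main.
Variable X : Type.
Variable d : X -> X -> R.
Variable le : X -> X -> Prop.
Variable F : X -> X -> X.
Hypothesis Hm : is_metric X d.
Hypothesis Hpo : partial_order X le.
Hypothesis Hcontr : forall eps, 0 < eps -> exists delta, 0 < delta /\
     forall x y u v, le x u -> le v y ->
       eps <= (d x u + d y v) / 2 < eps + delta ->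
       d (F x y) (F u v) < eps.
Hypothesis H1 : mixed_monotone X le F.

Definition cmp p q := Rp le p q \/ Rp le q p.

Lemma MK eps : 0 < eps -> exists delta, 0 < delta /\ forall p q, cmp p q ->
  eps <= Dp d p q < eps + delta -> Dp d (Gp F p) (Gp F q) < eps.
Proof.
  intros He. destruct (Hcontr eps He) as [delta [Hd H]]. exists delta; split; [exact Hd|].
  assert (K : forall p q, Rp le p q -> eps <= Dp d p q < eps + delta -> Dp d (Gp F p) (Gp F q) < eps).
  { intros [x y] [u v] [R1 R2] Hb. unfold Rp, Dp, Gp in *; simpl in *.
    pose proof (H x y u v R1 R2 Hb).
    assert (Hb' : eps <= (d v y + d u x) / 2 < eps + delta).
    { rewrite (d_sym d Hm v y), (d_sym d Hm u x). lra. }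
    pose proof (H v u y x R2 R1 Hb'). rewrite (d_sym d Hm (F v u)) in H2. lra. }
  intros p q [Hpq|Hqp] Hb.
  - apply K; auto.
  - rewrite Dp_sym by exact Hm. apply K; auto. rewrite Dp_sym by exact Hm. exact Hb.
Qed.

Lemma contr p q : cmp p q -> Dp d (Gp F p) (Gp F q) <= Dp d p q.
Proof.
  intros Hc. pose proof (Dp_pos d Hm p q).
  destruct (Rle_lt_or_eq_dec _ _ H) as [Hlt|Heq].
  - destruct (MK _ Hlt) as [delta [Hd K]]. left. apply K; auto. lra.
  - assert (p = q). { apply (Dp_small d Hm). intros; lra. } subst. rewrite !(Dp_self d Hm). lra.
Qed.

Lemma Rp_G p q : Rp le p q -> Rp le (Gp F p) (Gp F q).
Proof.
  intros [A B]. unfold Rp, Gp; simpl. split; apply H1; auto.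
Qed.

Lemma Rp_Gn n p q : Rp le p q -> Rp le (Gn F n p) (Gn F n q).
Proof. intros H; induction n; simpl; auto. apply Rp_G; auto. Qed.

Lemma cmp_Gn n p q : cmp p q -> cmp (Gn F n p) (Gn F n q).
Proof. intros [H|H]; [left|right]; apply Rp_Gn; auto. Qed.

Lemma Rp_trans p q r : Rp le p q -> Rp le q r -> Rp le p r.
Proof. destruct Hpo as [_ [_ T]]. intros [A B] [C D]. split; eauto. Qed.

Lemma linked_cmp p q : cmp p q -> linked d F p q.
Proof.
  intros Hc eps He.
  set (a := fun n => Dp d (Gn F n p) (Gn F n q)).
  assert (dec : forall n, a (S n) <= a n).
  { intro n. unfold a. simpl. apply contr. apply cmp_Gn; auto. }
  assert (decm : forall n k, a (n + k)%nat <= a n).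
  { intros n k; induction k. rewrite Nat.add_0_r; lra.
    rewrite Nat.add_succ_r. pose proof (dec (n+k)%nat). lra. }
  destruct (classic (exists N, forall n, (N <= n)%nat -> a n < eps)) as [E|E]; [exact E|].
  exfalso.
  assert (Ge : forall n, eps <= a n).
  { intro n. destruct (Rle_or_lt eps (a n)) as [h|h]; [exact h|]. exfalso. apply E.
    exists n. intros m Hm'. replace m with (n + (m - n))%nat by lia.
    pose proof (decm n (m-n)%nat). lra. }
  assert (Gr : Un_growing (fun n => - a n)). { intro n. pose proof (dec n). lra. }
  assert (Ub : has_ub (fun n => - a n)).
  { exists 0. intros r [i ->]. pose proof (Dp_pos d Hm (Gn F i p) (Gn F i q)). unfold a. lra. }
  destruct (growing_cv _ Gr Ub) as [l Hl].
  pose proof (growing_ineq _ _ Gr Hl) as Hle.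
  assert (Lpos : eps <= - l).
  { destruct (Rle_or_lt eps (-l)) as [h|h]; [exact h|].
    destruct (Hl (eps - (-l))) as [N HN]; [lra|].
    specialize (HN N (le_n _)). unfold Rdist in HN. apply Rabs_def2 in HN.
    pose proof (Ge N). lra. }
  destruct (MK (-l)) as [delta [Hd K]]; [lra|].
  destruct (Hl delta Hd) as [N HN]. specialize (HN N (le_n _)).
  unfold Rdist in HN. apply Rabs_def2 in HN.
  pose proof (Hle N). pose proof (Hle (S N)).
  assert (a (S N) < - l). { unfold a; simpl. apply K. apply cmp_Gn; auto. simpl in *. unfold a in *. lra. }
  simpl in *. lra.
Qed.

Lemma linked_sym p q : linked d F p q -> linked d F q p.
Proof. intros H e He. destruct (H e He) as [N HN]. exists N. intros n Hn.
  rewrite Dp_sym by exact Hm. auto. Qed.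

Lemma linked_trans p q r : linked d F p q -> linked d F q r -> linked d F p r.
Proof. intros A B e He. destruct (A (e/2)) as [N1 H1']; [lra|].
  destruct (B (e/2)) as [N2 H2']; [lra|]. exists (max N1 N2). intros n Hn.
  pose proof (Dp_tri d Hm (Gn F n p) (Gn F n q) (Gn F n r)).
  specialize (H1' n ltac:(lia)). specialize (H2' n ltac:(lia)). lra. Qed.

Lemma linked_refl p : linked d F p p.
Proof. intros e He. exists O. intros. rewrite Dp_self by exact Hm. lra. Qed.

Lemma linked_all : order_connected X le -> forall p q, linked d F p q.
Proof.
  intros Hc [x y] [u v]. destruct Hpo as [Rf _].
  apply linked_trans with (u, y).
  - destruct (Hc x u) as [n [z [Z0 [Zn Zc]]]].
    assert (forall i, (i <= n)%nat -> linked d F (z 0%nat, y) (z i, y)).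
    { induction i; intros Hi. apply linked_refl.
      apply linked_trans with (z i, y). apply IHi; lia.
      apply linked_cmp. specialize (Zc (S i) ltac:(lia)).
      replace (S i - 1)%nat with i in Zc by lia.
      destruct Zc as [Z|Z]; [left|right]; split; simpl; auto. }
    rewrite <- Z0, <- Zn. auto.
  - destruct (Hc y v) as [n [z [Z0 [Zn Zc]]]].
    assert (forall i, (i <= n)%nat -> linked d F (u, z 0%nat) (u, z i)).
    { induction i; intros Hi. apply linked_refl.
      apply linked_trans with (u, z i). apply IHi; lia.
      apply linked_cmp. specialize (Zc (S i) ltac:(lia)).
      replace (S i - 1)%nat with i in Zc by lia.
      destruct Zc as [Z|Z]; [right|left]; split; simpl; auto. }
    rewrite <- Z0, <- Zn. auto.
Qed.

End Main.

Section Exist.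
Variable X : Type.
Variable d : X -> X -> R.
Variable le : X -> X -> Prop.
Variable F : X -> X -> X.
Hypothesis Hm : is_metric X d.
Hypothesis Hpo : partial_order X le.
Hypothesis Hcontr : forall eps, 0 < eps -> exists delta, 0 < delta /\
     forall x y u v, le x u -> le v y ->
       eps <= (d x u + d y v) / 2 < eps + delta ->
       d (F x y) (F u v) < eps.
Hypothesis H1 : mixed_monotone X le F.
Variable p0 : X * X.
Hypothesis Hp0 : Rp le p0 (Gp F p0).

Lemma Rp_chain n k : Rp le (Gn F n p0) (Gn F (n + k) p0).
Proof.
  destruct Hpo as [Rf [_ _]].
  induction k. rewrite Nat.add_0_r. split; auto.
  apply Rp_trans with (Gn F (n + k) p0); auto.
  rewrite Nat.add_succ_r, Gn_S'. apply Rp_Gn; auto.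
Qed.

Lemma P_cauchy eps : 0 < eps -> exists N, forall m n, (N <= m)%nat -> (N <= n)%nat ->
  Dp d (Gn F m p0) (Gn F n p0) < eps.
Proof.
  intros He. set (e := eps / 3).
  destruct (MK X d le F Hm Hcontr e ltac:(unfold e; lra)) as [delta [Hd K]].
  set (dl := Rmin delta e).
  assert (dlpos : 0 < dl) by (unfold dl, e; apply Rmin_glb_lt; lra).
  assert (dle : dl <= delta) by apply Rmin_l.
  assert (dle2 : dl <= e) by apply Rmin_r.
  assert (Lk : linked d F p0 (Gp F p0)).
  { apply (linked_cmp X d le F); auto. left; auto. }
  destruct (Lk (dl/2)) as [N HN]; [lra|].
  assert (a : Dp d (Gn F N p0) (Gn F (S N) p0) < dl / 2).
  { specialize (HN N (le_n _)). rewrite <- Gn_S' in HN. exact HN. }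
  assert (Cl : forall k, Dp d (Gn F N p0) (Gn F (N + k) p0) < e + dl / 2).
  { induction k. rewrite Nat.add_0_r, Dp_self by exact Hm. unfold e; lra.
    pose proof (Dp_tri d Hm (Gn F N p0) (Gn F (S N) p0) (Gn F (N + S k) p0)).
    rewrite Nat.add_succ_r in *.
    change (Gn F (S N) p0) with (Gp F (Gn F N p0)) in H, a.
    change (Gn F (S (N + k)) p0) with (Gp F (Gn F (N + k) p0)) in H |- *.
    assert (Dp d (Gp F (Gn F N p0)) (Gp F (Gn F (N + k) p0)) < e).
    { assert (cm : cmp X le (Gn F N p0) (Gn F (N + k) p0)) by (left; apply Rp_chain).
      destruct (Rle_or_lt e (Dp d (Gn F N p0) (Gn F (N + k) p0))).
      - apply K; auto. lra.
      - pose proof (contr X d le F Hm Hcontr _ _ cm). lra. }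
    lra. }
  exists N. intros m n Hmm Hn.
  pose proof (Cl (m - N)%nat). pose proof (Cl (n - N)%nat).
  replace (N + (m - N))%nat with m in * by lia.
  replace (N + (n - N))%nat with n in * by lia.
  pose proof (Dp_tri d Hm (Gn F m p0) (Gn F N p0) (Gn F n p0)) as T3.
  rewrite (Dp_sym d Hm (Gn F m p0) (Gn F N p0)) in T3. unfold e in *. lra.
Qed.

End Exist.

Lemma conv_unique {X} (d : X -> X -> R) (Hm : is_metric X d) u a b :
  seq_converges X d u a -> seq_converges X d u b -> a = b.
Proof.
  intros A B. apply (d_small d Hm). intros e He.
  destruct (A (e/2)) as [N1 HA]; [lra|]. destruct (B (e/2)) as [N2 HB]; [lra|].
  specialize (HA (max N1 N2) ltac:(lia)). specialize (HB (max N1 N2) ltac:(lia)).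
  pose proof (d_tri d Hm a (u (max N1 N2)) b). rewrite (d_sym d Hm a (u (max N1 N2))) in H. lra.
Qed.

Lemma conv_shift {X} (d : X -> X -> R) u a :
  seq_converges X d u a -> seq_converges X d (fun n => u (S n)) a.
Proof. intros A e He. destruct (A e He) as [N HN]. exists N. intros n Hn. apply HN. lia. Qed.

Section Exist2.
Variable X : Type.
Variable d : X -> X -> R.
Variable le : X -> X -> Prop.
Variable F : X -> X -> X.
Hypothesis Hm : is_metric X d.
Hypothesis Hpo : partial_order X le.
Hypothesis Hcontr : forall eps, 0 < eps -> exists delta, 0 < delta /\
     forall x y u v, le x u -> le v y ->
       eps <= (d x u + d y v) / 2 < eps + delta ->
       d (F x y) (F u v) < eps.
Hypothesis H1 : mixed_monotone X le F.
Hypothesis Hcomplete : complete_metric X d.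
Hypothesis H34 : continuous2 X d F \/
     ((forall (xs : nat -> X) (x : X),
         (forall n, le (xs n) (xs (S n))) -> seq_converges X d xs x ->
         forall n, le (xs n) x) /\
      (forall (xs : nat -> X) (x : X),
         (forall n, le (xs (S n)) (xs n)) -> seq_converges X d xs x ->
         forall n, le x (xs n))).
Variable p0 : X * X.
Hypothesis Hp0 : Rp le p0 (Gp F p0).

Lemma exists_cfp : exists xs ys, F xs ys = xs /\ F ys xs = ys.
Proof.
  set (x := fun n => fst (Gn F n p0)). set (y := fun n => snd (Gn F n p0)).
  assert (Cx : cauchy_seq X d x).
  { intros e He. destruct (P_cauchy X d le F Hm Hpo Hcontr H1 p0 Hp0 (e/2)) as [N HN]; [lra|].
    exists N. intros m n A B. pose proof (Dp_fst d Hm (Gn F m p0) (Gn F n p0)).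
    specialize (HN m n A B). unfold x. lra. }
  assert (Cy : cauchy_seq X d y).
  { intros e He. destruct (P_cauchy X d le F Hm Hpo Hcontr H1 p0 Hp0 (e/2)) as [N HN]; [lra|].
    exists N. intros m n A B. pose proof (Dp_snd d Hm (Gn F m p0) (Gn F n p0)).
    specialize (HN m n A B). unfold y. lra. }
  destruct (Hcomplete x Cx) as [xs Lx]. destruct (Hcomplete y Cy) as [ys Ly].
  exists xs, ys.
  assert (K : seq_converges X d (fun n => x (S n)) (F xs ys) /\
              seq_converges X d (fun n => y (S n)) (F ys xs)).
  { destruct H34 as [Hc | [Hinc Hdec]].
    - split; intros e He.
      + destruct (Hc xs ys e He) as [dl [Hdl K]].
        destruct (Lx dl Hdl) as [N1 A]. destruct (Ly dl Hdl) as [N2 B].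
        exists (max N1 N2). intros n Hn.
        specialize (A n ltac:(lia)). specialize (B n ltac:(lia)).
        rewrite (d_sym d Hm) in A, B. specialize (K _ _ A B).
        unfold x; simpl. rewrite (d_sym d Hm). exact K.
      + destruct (Hc ys xs e He) as [dl [Hdl K]].
        destruct (Lx dl Hdl) as [N1 A]. destruct (Ly dl Hdl) as [N2 B].
        exists (max N1 N2). intros n Hn.
        specialize (A n ltac:(lia)). specialize (B n ltac:(lia)).
        rewrite (d_sym d Hm) in A, B. specialize (K _ _ B A).
        unfold y; simpl. rewrite (d_sym d Hm). exact K.
    - assert (Rn : forall n, Rp le (Gn F n p0) (Gn F (S n) p0)).
      { intro n. pose proof (Rp_chain X le F Hpo H1 p0 Hp0 n 1). rewrite Nat.add_1_r in H. exact H. }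
      assert (Lxs : forall n, le (x n) xs).
      { apply Hinc; auto. intro n. apply (Rn n). }
      assert (Lys : forall n, le ys (y n)).
      { apply Hdec; auto. intro n. apply (Rn n). }
      assert (Rs : forall n, Rp le (Gn F n p0) (xs, ys)).
      { intro n. split; simpl; [apply Lxs|apply Lys]. }
      assert (Dn : forall n, Dp d (Gp F (Gn F n p0)) (Gp F (xs, ys)) <= (d (x n) xs + d (y n) ys) / 2).
      { intro n. apply (contr X d le F Hm Hcontr). left. apply Rs. }
      split; intros e He.
      + destruct (Lx (e/2)) as [N1 A]; [lra|]. destruct (Ly (e/2)) as [N2 B]; [lra|].
        exists (max N1 N2). intros n Hn.
        specialize (A n ltac:(lia)). specialize (B n ltac:(lia)).
        pose proof (Dp_fst d Hm (Gp F (Gn F n p0)) (Gp F (xs, ys))). specialize (Dn n).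
        unfold x at 1; simpl. simpl in H. lra.
      + destruct (Lx (e/2)) as [N1 A]; [lra|]. destruct (Ly (e/2)) as [N2 B]; [lra|].
        exists (max N1 N2). intros n Hn.
        specialize (A n ltac:(lia)). specialize (B n ltac:(lia)).
        pose proof (Dp_snd d Hm (Gp F (Gn F n p0)) (Gp F (xs, ys))). specialize (Dn n).
        unfold y at 1; simpl. simpl in H. lra. }
  destruct K as [K1 K2]. split.
  - symmetry. apply (conv_unique d Hm _ _ _ (conv_shift d x xs Lx) K1).
  - symmetry. apply (conv_unique d Hm _ _ _ (conv_shift d y ys Ly) K2).
Qed.
End Exist2.

Lemma linked_fix {X} (d : X -> X -> R) (F : X -> X -> X) (Hm : is_metric X d) p q :
  linked d F p q -> Gp F p = p -> Gp F q = q -> p = q.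
Proof.
  intros L Hp Hq. apply (Dp_small d Hm). intros e He. destruct (L e He) as [N HN].
  specialize (HN N (le_n _)). rewrite !Gn_fix in HN; auto.
Qed.

Theorem theorem7 (X : Type) (d : X -> X -> R) (le : X -> X -> Prop)
  (F : X -> X -> X)
  (Hmetric : is_metric X d) (Hcomplete : complete_metric X d)
  (Hpo : partial_order X le)
  (Hcontr : forall eps, 0 < eps -> exists delta, 0 < delta /\
     forall x y u v, le x u -> le v y ->
       eps <= (d x u + d y v) / 2 < eps + delta ->
       d (F x y) (F u v) < eps)
  (H1 : mixed_monotone X le F)
  (H2 : exists x0 y0, le x0 (F x0 y0) /\ le (F y0 x0) y0)
  (H34 : continuous2 X d F \/
     ((forall (xs : nat -> X) (x : X),
         (forall n, le (xs n) (xs (S n))) -> seq_converges X d xs x ->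
         forall n, le (xs n) x) /\
      (forall (xs : nat -> X) (x : X),
         (forall n, le (xs (S n)) (xs n)) -> seq_converges X d xs x ->
         forall n, le x (xs n)))) :
  exists xs ys : X, coupled_fixed_point X F xs ys /\
    (order_connected X le ->
       xs = ys /\
       (forall x y, coupled_fixed_point X F x y -> x = xs /\ y = xs) /\
       (forall x, F x x = x -> x = xs) /\
       (forall x y, seq_converges X d (fun n => Fiter X F n x y) xs)).
Proof.
  destruct H2 as [x0 [y0 [A B]]].
  assert (Hp0 : Rp le (x0, y0) (Gp F (x0, y0))) by (split; simpl; auto).
  destruct (exists_cfp X d le F Hmetric Hpo Hcontr H1 Hcomplete H34 _ Hp0) as [xs [ys [E1 E2]]].
  exists xs, ys. split; [split; auto|].
  intros Hc.
  pose proof (linked_all X d le F Hmetric Hpo Hcontr H1 Hc) as LA.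
  assert (F1 : Gp F (xs, ys) = (xs, ys)) by (unfold Gp; simpl; rewrite E1, E2; reflexivity).
  assert (F2 : Gp F (ys, xs) = (ys, xs)) by (unfold Gp; simpl; rewrite E1, E2; reflexivity).
  assert (Exy : xs = ys).
  { pose proof (linked_fix d F Hmetric _ _ (LA (xs, ys) (ys, xs)) F1 F2). congruence. }
  assert (U : forall x y, coupled_fixed_point X F x y -> x = xs /\ y = xs).
  { intros x y [C1 C2].
    assert (Gp F (x, y) = (x, y)) by (unfold Gp; simpl; rewrite C1, C2; reflexivity).
    pose proof (linked_fix d F Hmetric _ _ (LA (x, y) (xs, ys)) H F1). split; congruence. }
  split; [exact Exy|]. split; [exact U|]. split.
  - intros x Hx. apply (U x x). split; auto.
  - intros x y e He. destruct (LA (x, y) (xs, ys) (e/2)) as [N HN]; [lra|].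
    exists N. intros n Hn. specialize (HN n Hn).
    rewrite (Gn_fix F n (xs, ys) F1), Gn_Fiter in HN.
    pose proof (Dp_fst d Hmetric (Fiter X F n x y, Fiter X F n y x) (xs, ys)). simpl in H. lra.
Qed.
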